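(* Let $q$ be a prime and $b,c$ positive integers, and set $b'=b/\gcd(b,c)$, $c'=c/\gcd(b,c)$. (1) The parameters $(b,c;q)$ are admissible if and only if $b'+c'=q^k$ for some positive integer $k$. (2) If $b'+c'=q^k$ for a positive integer $k$, then the threshold $n_0=n_0(b,c;q)$ satisfies $\max\{\frac{b}{q-1},\frac{b+c}{q}+k-1\}\le n_0\le\frac{b+c-\gcd(b,c)}{q-1}$.
   Context: The Hamming graph $H(n,q)$ has vertex set $\mathbb{Z}_q^n$, two vertices adjacent iff they differ in exactly one coordinate. A $(b,c)$-coloring of $H(n,q)$ is a surjective map onto $\{1,2\}$ in which each color-1 vertex has exactly $b$ neighbours of color 2 and each color-2 vertex has exactly $c$ neighbours of color 1. The parameters $(b,c;q)$ are admissible if a $(b,c)$-coloring of $H(n,q)$ exists for some $n$; in that case such colorings exist exactly for $n\ge n_0$ for some integer $n_0=n_0(b,c;q)$, called the threshold. *)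

(* Defs.v *)
From mathcomp Require Import all_boot.
Set Implicit Arguments. Unset Strict Implicit. Unset Printing Implicit Defensive.

Definition hvert (n q : nat) := {ffun 'I_n -> 'I_q}.

Definition hadj (n q : nat) (x y : hvert n q) : bool :=
  #|[set i : 'I_n | x i != y i]| == 1.

(* A 2-coloring: true = colour 1, false = colour 2. *)
Arguments hadj : clear implicits.
Definition is_bc_coloring (n q b c : nat) (f : hvert n q -> bool) : Prop :=
  [/\ (exists x, f x), (exists y, ~~ f y),
      (forall x, f x -> #|[set y | hadj n q x y & ~~ f y]| = b) &
      (forall x, ~~ f x -> #|[set y | hadj n q x y & f y]| = c)].

Definition has_bc_coloring (n q b c : nat) : Prop :=
  exists f : hvert n q -> bool, @is_bc_coloring n q b c f.

Definition admissible (b c q : nat) : Prop := exists n, has_bc_coloring n q b c.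

Definition is_threshold (b c q n0 : nat) : Prop :=
  has_bc_coloring n0 q b c /\ (forall n, has_bc_coloring n q b c -> n0 <= n).

(* Main.v *)
Require Import Defs.
From mathcomp Require Import all_boot all_order all_algebra ring lra zify.
Set Implicit Arguments. Unset Strict Implicit. Unset Printing Implicit Defensive.

Module PartA.
Import GRing.Theory Num.Theory.

Section Ham.
Variables n q : nat.
Local Notation V := (hvert n q).

Definition upd (x : V) (i : 'I_n) (v : 'I_q) : V :=
  [ffun j => if j == i then v else x j].

Lemma upd_at x i v : upd x i v i = v.
Proof. by rewrite ffunE eqxx. Qed.

Lemma upd_same x i : upd x i (x i) = x.
Proof. by apply/ffunP=> j; rewrite ffunE; case: eqP => // ->. Qed.

Lemma upd_upd x i u v : upd (upd x i u) i v = upd x i v.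
Proof. by apply/ffunP=> j; rewrite !ffunE; case: eqP. Qed.

Lemma upd_comm x i j u v : i != j ->
  upd (upd x i u) j v = upd (upd x j v) i u.
Proof.
move=> ij; apply/ffunP=> k; rewrite !ffunE.
case: (eqVneq k j) => [->|kj]; [by rewrite eq_sym (negPf ij) | by []].
Qed.

Lemma diff_upd_eq (x y : V) i v :
  (y i == v) && ([set j | x j != y j] == [set i]) =
  (y == upd x i v) && (v != x i).
Proof.
apply/idP/idP.
- case/andP=> /eqP yi /eqP D.
  have Hi : i \in [set j | x j != y j] by rewrite D set11.
  rewrite inE in Hi.
  apply/andP; split; last by rewrite -yi eq_sym.
  apply/eqP/ffunP=> j; rewrite ffunE; case: (eqVneq j i) => [->//|ji].
  apply/eqP; apply: contraR ji => hj.
  have : j \in [set j | x j != y j] by rewrite inE eq_sym.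
  by rewrite D inE.
- case/andP=> /eqP -> vx; rewrite upd_at eqxx /=.
  apply/eqP/setP=> j; rewrite !inE ffunE.
  by case: (eqVneq j i) => [->|_]; rewrite ?eqxx // eq_sym.
Qed.

Lemma nbr_count (P : pred V) x :
  #|[set y | hadj n q x y & P y]| =
  \sum_(i < n) \sum_(v | v != x i) P (upd x i v).
Proof.
rewrite -sum1_card big_mkcond /=.
have E : forall y, (if y \in [set y | hadj n q x y & P y] then 1 else 0) =
   \sum_(i < n) (([set j | x j != y j] == [set i]) * P y).
  move=> y; rewrite inE /hadj -big_distrl /=.
  case: (P y); rewrite ?andbF ?muln0 ?muln1 ?andbT //.
  case: cards1P => [[i0 Hi0]|Hn].
    rewrite Hi0 (bigD1 i0) //= eqxx big1 // => i /negPf ni.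
    by apply/eqP; rewrite eqb0; apply/eqP=> /set1_inj /eqP; rewrite eq_sym ni.
  by rewrite big1 // => i _; apply/eqP; rewrite eqb0; apply/eqP=> Hi; apply: Hn; exists i.
rewrite (eq_bigr _ (fun y _ => E y)) exchange_big /=.
apply: eq_bigr => i _.
rewrite (partition_big (fun y : V => y i) predT) //=.
rewrite [RHS]big_mkcond; apply: eq_bigr => v _.
rewrite big_mkcond /=.
rewrite (eq_bigr (fun y => (((y == upd x i v) && (v != x i)) * P y)%N)); last first.
  by move=> y _; rewrite -diff_upd_eq; case: (y i == v).
case: (v != x i) => /=.
  rewrite (bigD1 (upd x i v)) //= eqxx big1 ?addn0 ?mul1n // => y /negPf ->; by [].
by rewrite big1 // => y _; rewrite andbF.
Qed.
End Ham.

End PartA.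
Import PartA.
Module PartB.
Import GRing.Theory Num.Theory.
Local Open Scope ring_scope.

Section Ops.
Variables n q : nat.
Local Notation V := (hvert n q).

Definition L (i : 'I_n) (h : V -> rat) (x : V) : rat := \sum_(v < q) h (upd x i v).
Definition Pi (s : seq 'I_n) (h : V -> rat) : V -> rat := foldr (fun i h' => L i h') h s.

Lemma L_ext i (h1 h2 : V -> rat) : (forall y, h1 y = h2 y) -> forall x, L i h1 x = L i h2 x.
Proof. by move=> E x; apply: eq_bigr => v _. Qed.

Lemma Pi_ext s (h1 h2 : V -> rat) : (forall y, h1 y = h2 y) -> forall x, Pi s h1 x = Pi s h2 x.
Proof. by elim: s => [|i s IH] E x //=; apply: L_ext => y; apply: IH. Qed.

Lemma L_lin i a d (h1 h2 : V -> rat) x :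
  L i (fun y => a * h1 y + d * h2 y) x = a * L i h1 x + d * L i h2 x.
Proof. by rewrite /L big_split /= -!mulr_sumr. Qed.

Lemma Pi_lin s a d (h1 h2 : V -> rat) x :
  Pi s (fun y => a * h1 y + d * h2 y) x = a * Pi s h1 x + d * Pi s h2 x.
Proof.
elim: s x => [|i s IH] x //=.
rewrite -L_lin; apply: L_ext => y; exact: IH.
Qed.

Lemma L_scale i a (h : V -> rat) x : L i (fun y => a * h y) x = a * L i h x.
Proof. by rewrite /L -mulr_sumr. Qed.

Lemma Pi_scale s a (h : V -> rat) x : Pi s (fun y => a * h y) x = a * Pi s h x.
Proof.
elim: s x => [|i s IH] x //=.
rewrite -L_scale; apply: L_ext => y; exact: IH.
Qed.

Lemma L_sum i (I : finType) (H : I -> V -> rat) x :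
  L i (fun y => \sum_(j : I) H j y) x = \sum_(j : I) L i (H j) x.
Proof. by rewrite /L exchange_big. Qed.

Lemma Pi_sum s (I : finType) (H : I -> V -> rat) x :
  Pi s (fun y => \sum_(j : I) H j y) x = \sum_(j : I) Pi s (H j) x.
Proof.
elim: s x => [|i s IH] x //=.
rewrite -L_sum; apply: L_ext => y; exact: IH.
Qed.

Lemma L_upd i (h : V -> rat) x u : L i h (upd x i u) = L i h x.
Proof. by apply: eq_bigr => v _; rewrite upd_upd. Qed.

Lemma L_comm i j (h : V -> rat) x : L i (L j h) x = L j (L i h) x.
Proof.
case: (eqVneq i j) => [->//|ij].
rewrite /L exchange_big /=; apply: eq_bigr => v _; apply: eq_bigr => u _.
by rewrite upd_comm.
Qed.

Lemma L_idem i (h : V -> rat) x : L i (L i h) x = q%:R * L i h x.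
Proof.
rewrite {1}/L (eq_bigr (fun _ => L i h x)); last by move=> u _; rewrite L_upd.
by rewrite sumr_const card_ord mulr_natl.
Qed.

Lemma L_Pi_comm i s (h : V -> rat) x : L i (Pi s h) x = Pi s (L i h) x.
Proof.
elim: s x => [|j s IH] x //=.
rewrite L_comm; apply: L_ext => y; exact: IH.
Qed.

Lemma L_Pi_in i s (h : V -> rat) x : i \in s -> L i (Pi s h) x = q%:R * Pi s h x.
Proof.
elim: s x => [|j s IH] x //=.
rewrite in_cons; case: (eqVneq i j) => [->|ij] /= Hi; first exact: L_idem.
rewrite L_comm -L_scale; apply: L_ext => y; exact: IH.
Qed.

Lemma Pi_const s (a : rat) x : Pi s (fun _ => a) x = (q ^ size s)%:R * a.
Proof.
elim: s x => [|j s IH] x /=; first by rewrite mul1r.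
rewrite /L (eq_bigr (fun _ => (q ^ size s)%:R * a)) ?sumr_const ?card_ord; last by move=> v _; rewrite IH.
by rewrite expnS natrM -mulr_natl; ring.
Qed.

Definition Ln (i : 'I_n) (h : V -> nat) (x : V) : nat := (\sum_(v < q) h (upd x i v))%N.
Definition Pin (s : seq 'I_n) (h : V -> nat) : V -> nat := foldr (fun i h' => Ln i h') h s.

Lemma Pi_nat s (h : V -> nat) x : Pi s (fun y => (h y)%:R) x = (Pin s h x)%:R.
Proof.
elim: s x => [|j s IH] x //=.
rewrite /L /Ln natr_sum; apply: eq_bigr => v _; exact: IH.
Qed.

Lemma sumL i (F : V -> rat) : \sum_x L i F x = q%:R * \sum_x F x.
Proof.
rewrite /L pair_big /=.
pose psi (p : V * 'I_q) := (upd p.1 i p.2, p.1 i).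
have psiK : involutive psi.
  by case=> y w; rewrite /psi /= upd_upd upd_at upd_same.
rewrite (reindex_inj (inv_inj psiK)) /=.
under eq_bigr do rewrite upd_upd upd_same.
rewrite -(pair_big predT predT (fun y _ => F y)) /=.
rewrite mulr_sumr; apply: eq_bigr => y _.
by rewrite sumr_const card_ord mulr_natl.
Qed.

Lemma L_psd i (h : V -> rat) : (0 < q)%N -> 0 <= \sum_x h x * L i h x.
Proof.
have q0 : (0 <= q%:R :> rat) by rewrite ler0n.
have E : q%:R * \sum_x h x * L i h x = \sum_x L i h x ^+ 2.
  rewrite -(sumL i); apply: eq_bigr => x _.
  rewrite /L expr2 mulr_suml; apply: eq_bigr => u _.
  by under eq_bigr do rewrite upd_upd.
move=> qp.
have : 0 <= q%:R * \sum_x h x * L i h x by rewrite E; apply: sumr_ge0 => x _; apply: sqr_ge0.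
by rewrite pmulr_rge0 // ltr0n.
Qed.
End Ops.

End PartB.
Import PartB.
Module PartC.
Import GRing.Theory Num.Theory.
Import Order.TTheory.

Section Face.
Variables n q b c : nat.
Local Notation V := (hvert n q).
Variable f : V -> bool.
Hypothesis hq : 0 < q.
Hypothesis col : @is_bc_coloring n q b c f.

Lemma Ln_split (P : pred V) i x :
  Ln i (fun y => P y : nat) x = (P x + \sum_(v | v != x i) P (upd x i v))%N.
Proof. by rewrite /Ln (bigD1 (x i)) //= upd_same. Qed.

Lemma sumLn_P (P : pred V) x :
  (\sum_(i < n) Ln i (fun y => P y : nat) x)%N = (n * P x + #|[set y | hadj n q x y & P y]|)%N.
Proof.
have -> : (n * P x = \sum_(i < n) P x)%N by rewrite sum_nat_const card_ord.
rewrite nbr_count -big_split /=.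
by apply: eq_bigr => i _; rewrite Ln_split.
Qed.

Lemma sumLn_f x : (\sum_(i < n) Ln i (fun y => f y : nat) x)%N = if f x then (n * q - b)%N else c.
Proof.
case: col => _ _ Hb Hc.
case: (boolP (f x)) => fx.
  have E1 := sumLn_P (fun y => ~~ f y) x.
  rewrite /= fx muln0 add0n [#|_|]Hb // in E1.
  have E2 : (\sum_(i < n) (Ln i (fun y => f y : nat) x + Ln i (fun y => ~~ f y : nat) x))%N = (n * q)%N.
    rewrite (eq_bigr (fun _ => q)) ?sum_nat_const ?card_ord //.
    move=> i _; rewrite /Ln -big_split /= (eq_bigr (fun _ => 1%N)) ?sum_nat_const ?card_ord ?muln1 //.
    by move=> v _; case: (f _).
  by rewrite big_split /= E1 in E2; rewrite -E2 addnK.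
have E1 := sumLn_P (fun y => f y) x.
by rewrite /= (negPf fx) muln0 add0n [#|_|]Hc // in E1.
Qed.

Local Open Scope ring_scope.

Definition Gf (y : V) : rat := (b + c)%:R * (f y : nat)%:R + (- c%:R) * 1.

Lemma sumL_G y : \sum_(i < n) L i Gf y = ((n * q)%:R - (b + c)%:R) * Gf y.
Proof.
have Hb : (f y -> b <= n * q)%N.
  move=> fy; case: col => _ _ Hb _; rewrite -(Hb y fy) nbr_count.
  have -> : (n * q = \sum_(i < n) q)%N by rewrite sum_nat_const card_ord.
  apply: leq_sum => i _.
  rewrite -[X in (_ <= X)%N](card_ord q) -sum1_card big_mkcond /=.
  by apply: leq_sum => v _; case: (_ != _); rewrite ?leq_b1.
under eq_bigr do rewrite /Gf L_lin.
rewrite big_split /= -!mulr_sumr.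
have -> : \sum_(i < n) L i (fun _ : V => 1) y = (n * q)%:R.
  rewrite (eq_bigr (fun _ => q%:R)); last by move=> i _; rewrite /L sumr_const card_ord.
  by rewrite sumr_const card_ord natrM; ring.
have -> : \sum_(i < n) L i (fun y => (f y : nat)%:R) y = (if f y then (n * q - b)%N else c)%:R.
  by rewrite -sumLn_f natr_sum; apply: eq_bigr => i _; rewrite /L /Ln natr_sum.
rewrite /Gf; case: (boolP (f y)) => fy /=.
  rewrite natrB ?Hb // !natrD; ring.
rewrite !natrD; ring.
Qed.

Lemma face_eq (s : seq 'I_n) (x : V) : uniq s -> (q * (n - size s) < b + c)%N ->
  ((b + c) * Pin s (fun y => f y : nat) x = c * q ^ size s)%N.
Proof.
move=> us Hlt.
have sn : (size s <= n)%N by rewrite -(card_uniqP us) -[X in (_ <= X)%N]card_ord max_card.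
pose Hf := Pi s Gf.
have E1 : forall y, \sum_(i < n) L i Hf y = ((n * q)%:R - (b + c)%:R) * Hf y.
  move=> y; under eq_bigr do rewrite /Hf L_Pi_comm.
  rewrite -Pi_sum -Pi_scale; apply: Pi_ext => z; exact: sumL_G.
pose kap : rat := (q * (n - size s))%:R - (b + c)%:R.
have E2 : forall y, \sum_(i < n | i \notin s) L i Hf y = kap * Hf y.
  move=> y; have := E1 y; rewrite (bigID (fun i => i \in s)) /=.
  rewrite (eq_bigr (fun _ => q%:R * Hf y)); last by move=> i Hi; rewrite /Hf L_Pi_in.
  rewrite sumr_const.
  have -> : #|[pred i : 'I_n | i \in s]| = size s.
    by rewrite -(card_uniqP us); apply: eq_card.
  move=> H; rewrite /kap natrM natrB //.
  apply: (addrI (q%:R * Hf y *+ size s)); rewrite H natrM; ring.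
have kneg : kap < 0 by rewrite /kap subr_lt0 ltr_nat.
have Hpsd : 0 <= \sum_y Hf y * \sum_(i < n | i \notin s) L i Hf y.
  under eq_bigr do rewrite mulr_sumr.
  rewrite exchange_big /=; apply: sumr_ge0 => i _; exact: L_psd.
have E3 : \sum_y Hf y * \sum_(i < n | i \notin s) L i Hf y = kap * \sum_y Hf y ^+ 2.
  by rewrite mulr_sumr; apply: eq_bigr => y _; rewrite E2 expr2 mulrCA.
rewrite E3 in Hpsd.
have S0 : \sum_y Hf y ^+ 2 <= 0.
  by rewrite leNgt; apply/negP => Hp; move: Hpsd; rewrite leNgt (nmulr_rlt0 _ kneg) Hp.
have Hx : Hf x ^+ 2 <= 0.
  apply: le_trans S0; rewrite (bigD1 x) //= lerDl; apply: sumr_ge0 => y _; exact: sqr_ge0.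
have Hx0 : Hf x = 0.
  by apply/eqP; rewrite -sqrf_eq0 eq_le Hx sqr_ge0.
move: Hx0; rewrite /Hf /Gf Pi_lin Pi_const mulr1 Pi_nat => /eqP.
rewrite mulNr addr_eq0 opprK -!natrM eqr_nat => /eqP ->; by rewrite mulnC.
Qed.
End Face.

End PartC.
Import PartC.
Module PartD.
Import GRing.Theory Num.Theory.
Local Open Scope ring_scope.

Section Proj.
Variables (F : finFieldType) (k : nat).
Local Notation W := 'rV[F]_k.

Definition line (w : W) : {set W} := [set a *: w | a in [set a : F | a != 0]].
Definition rep (w : W) : W := odflt w [pick u in line w].
Definition Pset : {set W} := [set rep w | w in [set w : W | w != 0]].

Lemma line_scale a w : a != 0 -> line (a *: w) = line w.
Proof.
move=> a0; apply/setP=> u; apply/imsetP/imsetP => [[d]|[d]].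
  rewrite inE => d0 ->; exists (d * a); first by rewrite inE mulf_neq0.
  by rewrite scalerA.
rewrite inE => d0 ->; exists (d / a); first by rewrite inE mulf_neq0 ?invr_eq0.
by rewrite scalerA divfK.
Qed.

Lemma line_in w : w \in line w.
Proof. by apply/imsetP; exists 1; rewrite ?inE ?oner_neq0 ?scale1r. Qed.

Lemma rep_in w : rep w \in line w.
Proof.
rewrite /rep; case: pickP => [u -> //|H].
by move: (H w); rewrite line_in.
Qed.

Lemma rep_scale a w : a != 0 -> rep (a *: w) = rep w.
Proof.
move=> a0; rewrite /rep line_scale //; case: pickP => [//|H].
by move: (H w); rewrite line_in.
Qed.

Lemma rep_form w : exists2 a : F, a != 0 & rep w = a *: w.
Proof. by have /imsetP[a] := rep_in w; rewrite inE => a0 ->; exists a. Qed.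

Lemma rep_rep w : rep (rep w) = rep w.
Proof. by have [a a0 E] := rep_form w; rewrite {1}E rep_scale. Qed.

Lemma rep_neq0 w : w != 0 -> rep w != 0.
Proof. by move=> w0; have [a a0 ->] := rep_form w; rewrite scaler_eq0 negb_or a0. Qed.

Lemma Pset_neq0 p : p \in Pset -> p != 0.
Proof. by case/imsetP=> w; rewrite inE => w0 ->; exact: rep_neq0. Qed.

Lemma Pset_rep p : p \in Pset -> rep p = p.
Proof. by case/imsetP=> w _ ->; exact: rep_rep. Qed.

Lemma scale_injl (a d : F) (p : W) : p != 0 -> a *: p = d *: p -> a = d.
Proof.
move=> p0 /eqP; rewrite -subr_eq0 -scalerBl scaler_eq0 (negPf p0) orbF subr_eq0.
by move/eqP.
Qed.

Lemma fiber_sum (R : nmodType) (G : W -> R) :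
  \sum_(w | w != 0) G w = \sum_(p in Pset) \sum_(a : F | a != 0) G (a *: p).
Proof.
rewrite (partition_big rep (mem Pset)) /=; last first.
  by move=> w w0; apply/imsetP; exists w; rewrite ?inE.
apply: eq_bigr => p Pp.
have p0 := Pset_neq0 Pp.
pose h (a : F) := a *: p.
pose h' (w : W) : F := odflt 0 [pick a | w == a *: p].
rewrite (reindex_onto h h'); last first.
  move=> w /andP[w0 /eqP rw].
  have [a a0 E] := rep_form w.
  have Ew : w = a^-1 *: p by rewrite -rw E scalerA mulVf // scale1r.
  rewrite /h /h'; case: pickP => [d /eqP -> //|H].
  by move: (H a^-1); rewrite Ew eqxx.
apply: eq_bigl => a; rewrite /h /h'.
case: (eqVneq a 0) => [->|a0]; first by rewrite scale0r eqxx.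
rewrite scaler_eq0 (negPf a0) (negPf p0) /= rep_scale // Pset_rep // eqxx /=.
case: pickP => [d /eqP /esym E|H]; first by rewrite (scale_injl p0 E) eqxx.
by move: (H a); rewrite eqxx.
Qed.
End Proj.

End PartD.
Import PartD.
Module PartE.
Import GRing.Theory Num.Theory.

Lemma mod_sum (H : nat -> nat) m g :
  (\sum_(0 <= i < g * m) H (i %% m) = g * \sum_(0 <= j < m) H j)%N.
Proof.
elim: g => [|g IH]; first by rewrite !mul0n big_geq.
rewrite mulSn addnC (big_cat_nat (n:=g * m)) ?leq_addr //= IH.
rewrite -{1}[(g * m)%N]add0n big_addn addKn mulSn addnC; congr (_ + _)%N.
rewrite !big_nat; apply: eq_bigr => i /andP[_ im].
by rewrite addnC modnMDl modn_small.
Qed.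

Section Constr.
Variables (q k g cc : nat).
Hypothesis hq : prime q.
Hypothesis cq : (cc <= q ^ k)%N.
Local Notation F := 'F_q.
Local Notation W := 'rV[F]_k.
Local Notation P := (Pset F k).

Definition mP := #|P|.
Definition NN := (g * mP)%N.

Definition col (i : 'I_NN) : W := nth 0%R (enum P) (i %% mP).

Lemma mult_sum (G : W -> nat) : (\sum_(i < NN) G (col i) = g * \sum_(p in P) G p)%N.
Proof.
have := mod_sum (fun j => G (nth 0%R (enum P) j)) mP g.
rewrite big_mkord /= => ->; rewrite -big_enum (big_nth 0%R (r:=enum P)) -cardE.
by rewrite big_mkord.
Qed.

Definition phi (u : 'I_q) : F := cast_ord (esym (Fp_cast hq)) u.
Definition phi_inv (a : F) : 'I_q := cast_ord (Fp_cast hq) a.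
Lemma phiK : cancel phi phi_inv. Proof. exact: cast_ordKV. Qed.
Lemma phi_invK : cancel phi_inv phi. Proof. exact: cast_ordK. Qed.

Definition sigma (x : hvert NN q) : W := (\sum_(i < NN) phi (x i) *: col i)%R.

Lemma sigma_upd x i v :
  sigma (upd x i v) = (sigma x + (phi v - phi (x i)) *: col i)%R.
Proof.
rewrite /sigma (bigD1 i) //= [in RHS](bigD1 i) //= upd_at.
rewrite (eq_bigr (fun j => phi (x j) *: col j)%R); last first.
  by move=> j /negPf ji; rewrite ffunE ji.
by rewrite scalerBl [RHS]addrC !addrA subrK.
Qed.

Lemma reindex_phi (G : F -> nat) (u : 'I_q) :
  (\sum_(v | v != u) G (phi v - phi u)%R = \sum_(a | a != 0%R) G a)%N.
Proof.
pose h (a : F) := phi_inv (a + phi u)%R.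
have hb : bijective h.
  exists (fun v => phi v - phi u)%R => a; rewrite /h.
    by rewrite phi_invK addrK.
  by rewrite subrK phiK.
rewrite (reindex h); last exact: onW_bij.
apply: eq_big => a.
  rewrite /h; congr negb; apply/eqP/eqP => [H|->]; last by rewrite add0r phiK.
  by have := congr1 phi H; rewrite phi_invK => /(canRL (addrK _)); rewrite subrr.
by move=> _; rewrite /h phi_invK addrK.
Qed.
Lemma count_sigma (x : hvert NN q) (P0 : pred W) :
  #|[set y | hadj NN q x y & P0 (sigma y)]| = (g * \sum_(w | w != 0%R) P0 (sigma x + w)%R)%N.
Proof.
rewrite nbr_count.
rewrite (eq_bigr (fun i => \sum_(a | a != 0%R) P0 (sigma x + a *: col i)%R)); last first.
  move=> i _; rewrite -(reindex_phi (fun a => P0 (sigma x + a *: col i)%R) (x i)).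
  by apply: eq_bigr => v _; rewrite sigma_upd.
rewrite (mult_sum (fun p => \sum_(a | a != 0%R) P0 (sigma x + a *: p)%R)).
by rewrite (fiber_sum (fun w => (P0 (sigma x + w)%R : nat))).
Qed.

Lemma card_W : #|W| = (q ^ k)%N.
Proof. by rewrite card_mx card_Fp // mul1n. Qed.

Lemma cq' : (cc <= #|W|)%N. Proof. by rewrite card_W. Qed.

Definition Sset : {set W} := [set enum_val (widen_ord cq' i) | i : 'I_cc].

Lemma card_Sset : #|Sset| = cc.
Proof.
rewrite card_imset ?card_ord //.
by move=> i j /enum_val_inj /(congr1 val) /= /val_inj.
Qed.

Lemma sum_shift (s : W) (Q : pred W) : (\sum_w Q (s + w)%R = #|Q|)%N.
Proof.
rewrite (reindex_inj (addrI (- s)%R)) /=.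
under eq_bigr do rewrite addrA subrr add0r.
by rewrite -sum1_card [RHS]big_mkcond.
Qed.

Definition fcol (x : hvert NN q) : bool := sigma x \in Sset.

Lemma fcol_b x : fcol x -> #|[set y | hadj NN q x y & ~~ fcol y]| = (g * (q ^ k - cc))%N.
Proof.
move=> fx; have {}fx : sigma x \in Sset := fx; rewrite /fcol (count_sigma x (fun w => w \notin Sset)).
congr (_ * _)%N.
have := sum_shift (sigma x) (fun w => w \notin Sset).
rewrite (bigD1 0%R) //= addr0 fx /= add0n => ->.
rewrite -card_W -card_Sset -(cardsC Sset) addKn; apply: eq_card => w; by rewrite !inE.
Qed.

Lemma fcol_c x : ~~ fcol x -> #|[set y | hadj NN q x y & fcol y]| = (g * cc)%N.
Proof.
move=> fx; have {}fx : sigma x \notin Sset := fx; rewrite /fcol (count_sigma x (fun w => w \in Sset)).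
congr (_ * _)%N.
have := sum_shift (sigma x) (fun w => w \in Sset).
rewrite (bigD1 0%R) //= addr0 (negPf fx) /= add0n => ->.
by rewrite -card_Sset.
Qed.

Lemma sumC1 (T : finType) (x : T) : (\sum_(a : T | a != x) 1 = #|T|.-1)%N.
Proof. by rewrite -(cardC1 x) -sum1_card; apply: eq_bigl => a; rewrite inE. Qed.

Lemma mP_eq : (mP * (q - 1) = q ^ k - 1)%N.
Proof.
have := fiber_sum (fun _ : W => 1%N).
rewrite sumC1 card_W (eq_bigr (fun _ => (q - 1)%N)); last by move=> p _; rewrite sumC1 card_Fp // subn1.
by rewrite sum_nat_const => E; rewrite /mP -E subn1.
Qed.

Lemma mP_gt0 : (0 < k)%N -> (0 < mP)%N.
Proof.
move=> k0; rewrite lt0n; apply/negP => /eqP m0.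
have := mP_eq; rewrite m0 mul0n => /esym /eqP; rewrite subn_eq0 => H.
have : (q ^ 1 <= q ^ k)%N by rewrite leq_pexp2l ?prime_gt1 // prime_gt0.
by rewrite expn1 => /(leq_trans (prime_gt1 hq)); rewrite ltnNge H.
Qed.

Lemma constr_col : (0 < g)%N -> (0 < cc)%N -> (cc < q ^ k)%N ->
  @is_bc_coloring NN q (g * (q ^ k - cc)) (g * cc) fcol.
Proof.
move=> g0 c0 ck.
have Hx : exists x : hvert NN q, fcol x || ~~ fcol x.
  by exists [ffun _ => Ordinal (prime_gt0 hq)]; case: (fcol _).
case: Hx => x0 _.
have both : (exists x, fcol x) /\ (exists y, ~~ fcol y).
  case: (boolP (fcol x0)) => f0.
    have := fcol_b f0; have : (0 < g * (q ^ k - cc))%N by rewrite muln_gt0 g0 subn_gt0.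
    move=> H /esym E; rewrite E in H; case/card_gt0P: H => y; rewrite inE => /andP[_ fy].
    by split; [exists x0|exists y].
  have := fcol_c f0; have : (0 < g * cc)%N by rewrite muln_gt0 g0.
  move=> H /esym E; rewrite E in H; case/card_gt0P: H => y; rewrite inE => /andP[_ fy].
  by split; [exists y|exists x0].
case: both => H1 H2; split => //.
  by move=> x fx; rewrite fcol_b.
by move=> x fx; rewrite fcol_c.
Qed.
End Constr.

End PartE.
Import PartE.

Lemma b_le (n q b c : nat) (f : hvert n q -> bool) :
  @is_bc_coloring n q b c f -> b <= n * (q - 1).
Proof.
case=> [[x fx] _ Hb _]; rewrite -(Hb x fx) nbr_count.
have -> : n * (q - 1) = \sum_(i < n) (q - 1) by rewrite sum_nat_const card_ord.
apply: leq_sum => i _.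
apply: leq_trans (_ : \sum_(v | v != x i) 1 <= _).
  by apply: leq_sum => v _; rewrite leq_b1.
by rewrite sumC1 card_ord subn1.
Qed.

Theorem theorem10 (q b c : nat) (hq : prime q) (hb : 0 < b) (hc : 0 < c) :
  let g := gcdn b c in
  let b' := b %/ g in
  let c' := c %/ g in
  (admissible b c q <-> exists k, 0 < k /\ b' + c' = q ^ k) /\
  (forall k, 0 < k -> b' + c' = q ^ k ->
     forall n0, is_threshold b c q n0 ->
       [/\ b <= n0 * (q - 1),
           b + c + q * (k - 1) <= q * n0 &
           n0 * (q - 1) <= b + c - g]).
Proof.
move=> g b' c'.
have g0 : 0 < g by rewrite gcdn_gt0 hb.
have Eb : b = b' * g by rewrite divnK // dvdn_gcdl.
have Ec : c = c' * g by rewrite divnK // dvdn_gcdr.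
have b0 : 0 < b' by move: hb; rewrite Eb muln_gt0 => /andP[].
have c0 : 0 < c' by move: hc; rewrite Ec muln_gt0 => /andP[].
have cop : coprime b' c'.
  have : gcdn b' c' * g = g by rewrite muln_gcdl -Eb -Ec.
  by rewrite /coprime => /eqP; rewrite -{2}[g]mul1n eqn_pmul2r // => /eqP ->.
have cop2 : coprime (b' + c') c'.
  by rewrite /coprime gcdnC addnC gcdnDl gcdnC.
have q0 : 0 < q := prime_gt0 hq.
have key : forall n (f : hvert n q -> bool), @is_bc_coloring n q b c f ->
    forall s : seq 'I_n, uniq s -> q * (n - size s) < b + c ->
    exists N, (b' + c') * N = c' * q ^ size s.
  move=> n f col s us Hlt.
  have x : hvert n q := [ffun _ => Ordinal q0].
  have := face_eq q0 col x us Hlt.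
  rewrite Eb Ec -mulnDl => E; exists (Pin s (fun y => f y : nat) x).
  apply/eqP; rewrite -(eqn_pmul2r g0); apply/eqP.
  by rewrite mulnAC E mulnAC.
have adm_nec : admissible b c q -> exists k, 0 < k /\ b' + c' = q ^ k.
  case=> n [f col].
  have Hlt : q * (n - size (enum 'I_n)) < b + c by rewrite size_enum_ord subnn muln0 addn_gt0 hb.
  have [N' HN'] := key n f col (enum 'I_n) (enum_uniq _) Hlt.
  rewrite size_enum_ord in HN'.
  have : (b' + c') %| c' * q ^ n by rewrite -HN' dvdn_mulr.
  rewrite Gauss_dvdr // => /(dvdn_pfactor _ _ hq) [m _ Em].
  exists m; split => //.
  rewrite lt0n; apply/negP => /eqP m0; move: Em; rewrite m0 expn0.
  lia.
have constr : forall k, 0 < k -> b' + c' = q ^ k ->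
    has_bc_coloring (NN q k g) q b c.
  move=> k k0 Ek.
  have ck : c' < q ^ k by rewrite -Ek -addn1 addnC leq_add2r.
  have := constr_col hq (ltnW ck) g0 c0 ck.
  have -> : g * (q ^ k - c') = b by rewrite -Ek addnK Eb mulnC.
  have -> : g * c' = c by rewrite Ec mulnC.
  by move=> H; eexists; exact: H.
split.
  split; first exact: adm_nec.
  by case=> k [k0 Ek]; exists (NN q k g); exact: constr k k0 Ek.
move=> k k0 Ek n0 [[f col] Hmin].
split.
- exact: b_le col.
- rewrite leqNgt; apply/negP => Hlt.
  pose m := minn (k - 1) n0.
  pose s := take m (enum 'I_n0).
  have us : uniq s by rewrite take_uniq // enum_uniq.
  have ss : size s = m by rewrite size_take size_enum_ord; case: ltnP => // H; apply/eqP; rewrite eqn_leq H /m geq_minr.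
  have Hlt2 : q * (n0 - size s) < b + c.
    rewrite ss /m; case: (leqP n0 (k - 1)) => H.
      by rewrite subnn muln0 addn_gt0 hb.
    by rewrite mulnBr; lia.
  have [N HN] := key n0 f col s us Hlt2.
  rewrite ss Ek in HN.
  have mk : m < k by rewrite /m; lia.
  have : q ^ k = q ^ m * q ^ (k - m) by rewrite -expnD subnKC // ltnW.
  move=> E.
  have qm : 0 < q ^ m by rewrite expn_gt0 q0.
  have HN2 : q ^ (k - m) * N = c'.
    by apply/eqP; rewrite -(eqn_pmul2l qm) mulnA -E HN mulnC.
  have qc : q %| c'.
    by rewrite -HN2 dvdn_mulr // -{1}(expn1 q) dvdn_exp2l // subn_gt0.
  have qbc : q %| b' + c' by rewrite Ek -{1}(expn1 q) dvdn_exp2l.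
  have qb : q %| b' by rewrite -(dvdn_addl _ qc).
  have : q %| gcdn b' c' by rewrite dvdn_gcd qb qc.
  by rewrite (eqP cop) dvdn1 => /eqP q1; move: (prime_gt1 hq); rewrite q1.
- have := Hmin _ (constr k k0 Ek).
  move=> H.
  have E1 : NN q k g * (q - 1) = g * (q ^ k - 1) by rewrite /NN -mulnA mP_eq.
  have E2 : b + c - g = g * (q ^ k - 1).
    by rewrite Eb Ec -mulnDl Ek mulnBr muln1 mulnC.
  by rewrite E2 -E1 leq_mul2r H orbT.
Qed.
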